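(* Let $v_2$, $v_3$ and $\delta$ satisfy the standing assumptions described in the context. A deformation $y:H\to\mathbb{R}^3$ is a ground state (i.e. a minimizer of $E$ among all maps $H\to\mathbb{R}^3$) if and only if all its cells are optimal, i.e. every cell $(y(x_1),\dots,y(x_6))$ of $y$ is a minimizer of $E_{\rm cell}$ over $(\mathbb{R}^3)^6$.
   Context: Hexagonal lattice: $H=\{sa+tb+rc: s,t\in\mathbb{Z},\ r\in\{0,1\}\}\subset\mathbb{R}^2$ with $a=(3/2,\sqrt3/2)$, $b=(0,\sqrt3)$, $c=(1,0)$. The hexagonal graph connects points of $H$ at distance $1$. A reference cell is a set $\{x_1,\dots,x_6\}\subset H$ forming a simple cycle (a hexagon) in the hexagonal graph, labeled counterclockwise so that $x_1$ is the vertex of the form $na+mb$ ($n,m\in\mathbb{Z}$) with $n+m$ minimal in the cell. For a deformation $y:H\to\mathbb{R}^3$, the corresponding cell is $(y_1,\dots,y_6)$ with $y_i=y(x_i)$; indices are taken modulo $6$. Barycenters of reference cells are the points $(1/2,\sqrt3/2)+sa+tb$, $(s,t)\in\mathbb{Z}^2$, and the cell is indexed by $(s,t)$. Cell energy: $$E_{\rm cell}(y_1,\dots,y_6)=\tfrac12\sum_{i=1}^6 v_2(|y_i-y_{i-1}|)+\sum_{i=1}^6 v_2(|y_i-y_{i-2}|)+\sum_{i=1}^6 v_3(\theta_i),$$ where $\theta_i\in[0,\pi]$ is the angle at $y_i$ between the segments $\{y_i,y_{i+1}\}$ and $\{y_i,y_{i-1}\}$. Energy of a deformation: $E(y)=\sup_{m\in\mathbb{N}}\frac{1}{\#(T\cap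 B_m)}\sum_{(s,t)\in T\cap B_m}E_{\rm cell}(s,t)$, where $T=(1/2,\sqrt3/2)+\{sa+tb:s,t\in\mathbb{Z}\}$, $B_m$ is the ball of radius $m$ centered at $0$, and $E_{\rm cell}(s,t)$ is the cell energy of the cell with barycenter $(1/2,\sqrt3/2)+sa+tb$. An optimal cell is a minimizer of $E_{\rm cell}$ on $(\mathbb{R}^3)^6$. Standing assumptions: $v_2:(0,\infty)\to[-1,\infty)$ is continuous, attains its minimum value $-1$ only at $1$, is decreasing on $(0,1)$ and increasing on $[1,\infty)$, and is differentiable on $(5/4,\sqrt3]$ with $v_2'>0$ there; $v_3:[0,\pi]\to[0,\infty)$ is continuous, attains its minimum value $0$ only at $2\pi/3$, and is differentiable at $2\pi/3$. Moreover there is $0<\delta\le 0.2$ with: (i) $v_2(1-\delta)>11+12v_2(\sqrt3)$; (ii) $v_2(1+\delta)>-1+12v_2(\sqrt3)-12v_2(\sqrt3(1-\delta)^2)$; (iii) $v_3(\theta)>6+6v_2(\sqrt3)$ whenever $|\theta-2\pi/3|\ge\delta$; (iv) the map $(\ell_1,\ell_2,\theta)\mapsto \frac14 v_2(\ell_1)+\frac14 v_2(\ell_2)+v_2\big((\ell_1^2+\ell_2^2-2\ell_1\ell_2\cos\theta)^{1/2}\big)+v_3(\theta)$ is strictly convex on $\{|\ell_1-1|<\delta,\ |\ell_2-1|<\delta,\ |\theta-2\pi/3|<\delta\}$. *)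

(* Defs.v *)
From HB Require Import structures.
From mathcomp Require Import all_boot all_order all_algebra.
From mathcomp Require Import all_classical all_reals all_analysis.
From mathcomp Require Import ring lra.
Set Implicit Arguments. Unset Strict Implicit. Unset Printing Implicit Defensive.
Import Order.TTheory GRing.Theory Num.Theory.
Import numFieldNormedType.Exports.
Local Open Scope classical_set_scope.
Local Open Scope ring_scope.

Lemma ball_bound (R : realType) (S T M : R) :
  0 <= M ->
  (1 / 2 + 3 / 2 * S) ^+ 2 + (Num.sqrt 3 / 2 + Num.sqrt 3 / 2 * S + Num.sqrt 3 * T) ^+ 2 <= M ^+ 2 ->
  `|S| <= 3 * M + 3 /\ `|T| <= 3 * M + 3.
Proof.
move=> M0 H.
have h3 : Num.sqrt (3:R) ^+ 2 = 3 by rewrite sqr_sqrtr.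
set r := Num.sqrt 3 in H h3.
have e : (r / 2 + r / 2 * S + r * T) ^+ 2 = 3 * (1/2 + S/2 + T) ^+ 2.
  by rewrite -h3; ring.
rewrite e in H.
have q1 := sqr_ge0 (1/2 + S/2 + T).
have q2 := sqr_ge0 (1 / 2 + 3 / 2 * S).
have hx : (1 / 2 + 3 / 2 * S) ^+ 2 <= M ^+ 2 by lra.
have hy : (1/2 + S/2 + T) ^+ 2 <= M ^+ 2 by lra.
have ax : `|1 / 2 + 3 / 2 * S| <= M by rewrite -ler_sqr ?nnegrE ?normr_ge0 // real_normK ?num_real.
have ay : `|1 / 2 + S/2 + T| <= M by rewrite -ler_sqr ?nnegrE ?normr_ge0 // real_normK ?num_real.
move: ax ay => /ler_normlP[a1 a2] /ler_normlP[b1 b2].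
split; apply/ler_normlP; split; lra.
Qed.

Section Hex.
Variable R : realType.

Definition vec := 'rV[R]_3.
Definition dot (u v : vec) : R := \sum_(i < 3) u ord0 i * v ord0 i.
(* Euclidean norm (NOT the library's max-norm on 'rV) *)
Definition enorm (u : vec) : R := Num.sqrt (dot u u).
Definition dist3 (u v : vec) : R := enorm (u - v).
Definition angle (p q r : vec) : R :=
  acos (dot (r - q) (p - q) / (enorm (r - q) * enorm (p - q))).

(* A point of H is s a + t b + r c with s,t : int, r : bool (r = 0/1).
   The map (s,t,r) |-> s a + t b + r c is injective, so a deformation
   y : H -> R^3 is represented by a function of (s,t,r). *)
Definition sqrt3 : R := Num.sqrt 3.
Definition posH (s t : int) (r : bool) : R * R :=
  (3 / 2 * s%:~R + (r : nat)%:R, sqrt3 / 2 * s%:~R + sqrt3 * t%:~R).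
Definition deformation := int -> int -> bool -> vec.

(* A cell is a 6-tuple (y_1,...,y_6), stored with labels 0..5 (label k here
   = label k+1 in the paper); indices are taken modulo 6. *)
Definition cell := 'I_6 -> vec.
Definition sh (i : 'I_6) (k : nat) : 'I_6 := inZp (i + k).
(* i-1 = sh i 5, i-2 = sh i 4, i+1 = sh i 1 (mod 6) *)

(* Reference cell with barycenter (1/2, sqrt3/2) + s a + t b, labeled
   counterclockwise starting from the vertex s a + t b (the vertex of the
   form n a + m b with minimal n + m):
     x1 = sa+tb, x2 = sa+tb+c, x3 = (s+1)a+tb, x4 = sa+(t+1)b+c,
     x5 = sa+(t+1)b, x6 = (s-1)a+(t+1)b+c. *)
Definition cellH (s t : int) (i : 'I_6) : int * int * bool :=
  match val i with
  | 0 => (s, t, false)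
  | 1 => (s, t, true)
  | 2 => (s + 1, t, false)
  | 3 => (s, t + 1, true)
  | 4 => (s, t + 1, false)
  | _ => (s - 1, t + 1, true)
  end.
Definition cell_of (y : deformation) (s t : int) : cell :=
  fun i => let: (a, b, r) := cellH s t i in y a b r.

Definition barycenter (s t : int) : R * R :=
  (1 / 2 + 3 / 2 * s%:~R, sqrt3 / 2 + sqrt3 / 2 * s%:~R + sqrt3 * t%:~R).

Definition Ecell (v2 v3 : R -> R) (c : cell) : R :=
  2^-1 * (\sum_(i < 6) v2 (dist3 (c i) (c (sh i 5))))
  + \sum_(i < 6) v2 (dist3 (c i) (c (sh i 4)))
  + \sum_(i < 6) v3 (angle (c (sh i 5)) (c i) (c (sh i 1))).

(* v2 is only defined on (0,oo): a cell is admissible when all the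
   distances entering E_cell are positive (this also makes all angles
   well defined). *)
Definition admissible_cell (c : cell) : Prop :=
  forall i : 'I_6, c i != c (sh i 5) /\ c i != c (sh i 4).
Definition optimal_cell (v2 v3 : R -> R) (c : cell) : Prop :=
  admissible_cell c /\
  forall c' : cell, admissible_cell c' -> Ecell v2 v3 c <= Ecell v2 v3 c'.
Definition admissible (y : deformation) : Prop :=
  forall s t, admissible_cell (cell_of y s t).

Definition zrange (N : nat) : seq int :=
  [seq (i%:Z - N%:Z) | i <- iota 0 (2 * N).+1].
Definition in_ball (m : nat) (st : int * int) : bool :=
  let: (bx, by_) := barycenter st.1 st.2 in bx ^+ 2 + by_ ^+ 2 <= (m%:R) ^+ 2.
(* T ∩ B_m (closed ball); the box [-(3m+3), 3m+3]^2 contains all of it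
   (see lemma ball_in_box below) *)
Definition ball_cells (m : nat) : seq (int * int) :=
  [seq st <- [seq (s, t) | s <- zrange (3 * m + 3), t <- zrange (3 * m + 3)]
     | in_ball m st].
Definition avg_energy (v2 v3 : R -> R) (y : deformation) (m : nat) : R :=
  (\sum_(st <- ball_cells m) Ecell v2 v3 (cell_of y st.1 st.2))
    / (size (ball_cells m))%:R.
Definition energy (v2 v3 : R -> R) (y : deformation) : \bar R :=
  ereal_sup [set (avg_energy v2 v3 y m)%:E | m in [set m : nat | (1 <= m)%N]].

Definition ground_state (v2 v3 : R -> R) (y : deformation) : Prop :=
  admissible y /\
  forall z : deformation, admissible z -> (energy v2 v3 y <= energy v2 v3 z)%E.

Definition standing_assumptions (v2 v3 : R -> R) (delta : R) : Prop :=
  ((forall x, 0 < x -> {for x, continuous v2}) /\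
   (forall x, 0 < x -> -1 <= v2 x) /\ v2 1 = -1 /\
   (forall x, 0 < x -> v2 x = -1 -> x = 1) /\
   (forall x x', 0 < x -> x < x' -> x' < 1 -> v2 x' < v2 x) /\
   (forall x x', 1 <= x -> x < x' -> v2 x < v2 x') /\
   (forall x, 5 / 4 < x <= sqrt3 -> derivable v2 x 1 /\ 0 < derive1 v2 x)) /\
  ({within `[0, pi], continuous v3} /\
   (forall th, 0 <= th <= pi -> 0 <= v3 th) /\
   v3 (2 * pi / 3) = 0 /\
   (forall th, 0 <= th <= pi -> v3 th = 0 -> th = 2 * pi / 3) /\
   derivable v3 (2 * pi / 3) 1) /\
  (0 < delta <= 1 / 5 /\
   v2 (1 - delta) > 11 + 12 * v2 sqrt3 /\
   v2 (1 + delta) > -1 + 12 * v2 sqrt3 - 12 * v2 (sqrt3 * (1 - delta) ^+ 2) /\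
   (forall th, 0 <= th <= pi -> `|th - 2 * pi / 3| >= delta ->
                  v3 th > 6 + 6 * v2 sqrt3) /\
   (let f (l1 l2 th : R) :=
      4^-1 * v2 l1 + 4^-1 * v2 l2
      + v2 (Num.sqrt (l1 ^+ 2 + l2 ^+ 2 - 2 * l1 * l2 * cos th)) + v3 th in
    let inbox (l1 l2 th : R) :=
      [/\ `|l1 - 1| < delta, `|l2 - 1| < delta & `|th - 2 * pi / 3| < delta] in
    forall l1 l2 th l1' l2' th' lam,
      inbox l1 l2 th -> inbox l1' l2' th' ->
      (l1, l2, th) <> (l1', l2', th') -> 0 < lam < 1 ->
      f (lam * l1 + (1 - lam) * l1') (lam * l2 + (1 - lam) * l2')
        (lam * th + (1 - lam) * th')
      < lam * f l1 l2 th + (1 - lam) * f l1' l2' th')).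

Lemma ball_in_box (m : nat) (s t : int) : in_ball m (s, t) ->
  `|s%:~R : R| <= 3 * m%:R + 3 /\ `|t%:~R : R| <= 3 * m%:R + 3.
Proof. by rewrite /in_ball /barycenter /= => /ball_bound; apply. Qed.

End Hex.

(* Main.v *)
Require Import Defs.
From HB Require Import structures.
From mathcomp Require Import all_boot all_order all_algebra.
From mathcomp Require Import all_classical all_reals all_analysis.
From mathcomp Require Import ring lra zify.
Import Order.TTheory GRing.Theory Num.Theory.
Import numFieldNormedType.Exports.
Local Open Scope ring_scope.
Set Implicit Arguments. Unset Strict Implicit. Unset Printing Implicit Defensive.

Definition mk3 (R : realType) (x y w : R) : vec R := \row_(k < 3) nth 0 [:: x; y; w] k.



Lemma dot_mk3 (R : realType) (a b c x y w : R) : dot (mk3 a b c) (mk3 x y w) = a * x + b * y + c * w.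
Proof. by rewrite /dot !big_ord_recr !big_ord0 /= !mxE /= add0r. Qed.

Lemma mk3B (R : realType) (a b c x y w : R) : mk3 a b c - mk3 x y w = mk3 (a - x) (b - y) (c - w).
Proof. apply/matrixP => i j; rewrite !mxE; case: j => [[|[|[|]]] ?] //=. Qed.

Lemma dot_ge0 (R : realType) (u : vec R) : 0 <= dot u u.
Proof. by rewrite /dot sumr_ge0 // => i _; rewrite -expr2 sqr_ge0. Qed.

Lemma dot_law (R : realType) (p q r : vec R) :
  dot (p - r) (p - r) = dot (p - q) (p - q) + dot (r - q) (r - q) - 2 * dot (r - q) (p - q).
Proof. rewrite /dot !big_ord_recr !big_ord0 /= !mxE /=. ring. Qed.

Lemma dot_CS (R : realType) (u v : vec R) : dot u v ^+ 2 <= dot u u * dot v v.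
Proof. rewrite /dot !big_ord_recr !big_ord0 /= !add0r.
set a := u _ _; set b := u _ _; set c := u _ _.
set x := v _ _; set y := v _ _; set z := v _ _.
have h : 0 <= (a*y - b*x)^+2 + (a*z - c*x)^+2 + (b*z - c*y)^+2.
  by rewrite !addr_ge0 ?sqr_ge0.
rewrite -subr_ge0; apply: le_trans h _; rewrite le_eqVlt; apply/orP; left; apply/eqP; ring.
Qed.

Lemma dist3C (R : realType) (u v : vec R) : dist3 u v = dist3 v u.
Proof. rewrite /dist3 /enorm -opprB; congr Num.sqrt; rewrite /dot; apply: eq_bigr => i _; rewrite !mxE; ring. Qed.

Lemma cos_le_mono (R : realType) (x y : R) : 0 <= x -> x <= y -> y <= pi -> cos y <= cos x.
Proof.
move=> x0 xy ypi; rewrite leNgt; apply/negP => h.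
have := h; rewrite ltr_cos ?in_itv /= ?x0 ?ypi ?(le_trans x0 xy) ?(le_trans xy ypi) //.
by rewrite ltNge xy.
Qed.

Lemma cos_2pi3 (R : realType) : cos (2 * pi / 3) = - 2^-1 :> R.
Proof.
set c := cos (2 * pi / 3).
have h1 : cos ((2 * pi / 3) *+ 2) = c.
  have -> : (2 * pi / 3) *+ 2 = - (2 * pi / 3) + (pi : R) *+ 2 by field.
  by rewrite cosD2pi cosN.
rewrite cos_mulr2n in h1.
have hc1 : c != 1.
  apply/eqP => hc.
  have : 2 * pi / 3 = 0 :> R.
    apply: (@cos_inj R); rewrite ?in_itv /= ?cos0 //.
    - have hp := pi_ge2 R; apply/andP; split; lra.
    - have hp := pi_ge2 R; apply/andP; split; lra.
  have hp := pi_ge2 R; lra.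
rewrite -/c in h1.
have : (2 * c + 1) * (c - 1) = 0.
  have e : (2*c+1)*(c-1) = (c ^+ 2 *+ 2 - 1) - c by ring.
  by rewrite e h1 subrr.
move/eqP; rewrite mulf_eq0 => /orP[|]; first by move/eqP => h; lra.
by rewrite subr_eq0 (negbTE hc1).
Qed.

Lemma sin_le_id (R : realType) (x : R) : 0 <= x -> sin x <= x.
Proof.
rewrite le_eqVlt => /orP[/eqP <-|x0]; first by rewrite sin0.
have [c _ h] := @MVT R sin cos 0 x x0 (fun y _ => is_derive_sin y)
  (continuous_subspaceT (@continuous_sin R)).
rewrite sin0 subr0 subr0 in h; rewrite h.
by rewrite ler_piMl ?cos_le1 // ltW.
Qed.

Lemma cos_box_bound (R : realType) (d th : R) : 0 < d <= 1/5 ->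
  2 * pi / 3 - d <= th -> th <= pi -> cos th <= - 2^-1 + d + d ^+ 2 / 4.
Proof.
move=> /andP[d0 d15] h1 h2; have hp := pi_ge2 R.
apply: (le_trans (cos_le_mono _ h1 h2)); first lra.
rewrite cosB cos_2pi3.
have s1 := sin_le1 (2 * pi / 3 : R).
have s2 : 0 <= sin (2 * pi / 3 : R) by apply: sin_ge0_pi; apply/andP; split; lra.
have sd0 : 0 <= sin d by apply: sin_ge0_pi; apply/andP; split; lra.
have sd1 : sin d <= d by apply: sin_le_id; lra.
have hcd : cos d = 1 - 2 * sin (d / 2) ^+ 2.
  have -> : d = (d / 2) *+ 2 by rewrite mulr2n; field.
  rewrite cos_mulr2n cos2sin2 mulr2n. have -> : d / 2 *+ 2 / 2 = d / 2 by rewrite mulr2n; field.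
  ring.
have h0 : 0 <= sin (d / 2) by apply: sin_ge0_pi; apply/andP; split; lra.
have h3 : sin (d / 2) <= d / 2 by apply: sin_le_id; lra.
rewrite hcd.
have : sin (d/2) ^+ 2 <= (d/2) ^+ 2 by rewrite ler_sqr ?nnegrE //; lra.
have : sin (2 * pi / 3) * sin d <= sin d by rewrite ler_piMl.
lra.
Qed.

Lemma sh_sh (i : 'I_6) a b : sh (sh i a) b = sh i (a + b).
Proof. apply: val_inj => /=; by rewrite modnDml addnA. Qed.

Lemma sh6 (i : 'I_6) : sh i 6 = i.
Proof. apply: val_inj => /=; by rewrite modnDr modn_small. Qed.

Lemma sh_inj1 : injective (fun i : 'I_6 => sh i 1).
Proof.
move=> i j /= h.
have : sh (sh i 1) 5 = sh (sh j 1) 5 by rewrite h.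
by rewrite !sh_sh !sh6.
Qed.

Lemma sum_sh1 (R : realType) (F : 'I_6 -> R) : \sum_(i < 6) F (sh i 1) = \sum_(i < 6) F i.
Proof. by rewrite [RHS](reindex_inj sh_inj1). Qed.

Lemma dotC (R : realType) (u v : vec R) : dot u v = dot v u.
Proof. by rewrite /dot; apply: eq_bigr => i _; rewrite mulrC. Qed.

Lemma dot0 (R : realType) (u : vec R) : dot u u = 0 -> u = 0.
Proof.
rewrite /dot !big_ord_recr !big_ord0 /= add0r => h.
set a := u _ _ in h; set b := u _ _ in h; set c := u _ _ in h.
have ha : a = 0 by have := sqr_ge0 a; have := sqr_ge0 b; have := sqr_ge0 c; rewrite !expr2; nra.
have hb : b = 0 by have := sqr_ge0 a; have := sqr_ge0 b; have := sqr_ge0 c; rewrite !expr2; nra.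
have hc : c = 0 by have := sqr_ge0 a; have := sqr_ge0 b; have := sqr_ge0 c; rewrite !expr2; nra.
apply/matrixP => i j; rewrite !mxE (ord1 i).
by case: j => [[|[|[|//]]] hj]; [rewrite -ha | rewrite -hb | rewrite -hc]; congr (u _ _); apply: val_inj.
Qed.

Lemma enorm_gt0 (R : realType) (p q : vec R) : p != q -> 0 < enorm (p - q).
Proof.
move=> pq; rewrite /enorm sqrtr_gt0 lt_def dot_ge0 andbT.
apply/eqP => /dot0/eqP; rewrite subr_eq0; exact/negP.
Qed.

Lemma enorm_sqr (R : realType) (u : vec R) : enorm u ^+ 2 = dot u u.
Proof. by rewrite /enorm sqr_sqrtr // dot_ge0. Qed.

Lemma law_cos (R : realType) (p q r : vec R) : p != q -> r != q ->
  [/\ 0 < enorm (p - q), 0 < enorm (r - q),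
      0 <= acos (dot (p - q) (r - q) / (enorm (p - q) * enorm (r - q))) <= pi &
      enorm (p - r) = Num.sqrt (enorm (p - q) ^+ 2 + enorm (r - q) ^+ 2
         - 2 * enorm (p - q) * enorm (r - q) * cos (acos (dot (p - q) (r - q) / (enorm (p - q) * enorm (r - q)))))].
Proof.
move=> pq rq.
have a0 := enorm_gt0 pq; have b0 := enorm_gt0 rq.
set a := enorm (p - q) in a0 *; set b := enorm (r - q) in b0 *.
set D := dot (p - q) (r - q).
have cs : D ^+ 2 <= (a * b) ^+ 2.
  by rewrite exprMn /a /b !enorm_sqr /D dot_CS.
have ab0 : 0 < a * b by rewrite mulr_gt0.
have hx : -1 <= D / (a * b) <= 1.
  set P := a * b in cs ab0 *.
  have h1 : - P <= D by rewrite !expr2 in cs; nra.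
  have h2 : D <= P by rewrite !expr2 in cs; nra.
  apply/andP; split.
    by rewrite ler_pdivlMr // mulN1r.
  by rewrite ler_pdivrMr // mul1r.
split => //.
  by rewrite acos_ge0 // acos_lepi.
rewrite acosK; last by rewrite in_itv /=.
rewrite /enorm; congr Num.sqrt.
rewrite (dot_law p q r) /a /b !enorm_sqr /D (dotC (r - q)).
field; by rewrite -/a -/b !gt_eqF.
Qed.

Definition Ff (R : realType) (v2 v3 : R -> R) (l1 l2 th : R) : R :=
  4^-1 * v2 l1 + 4^-1 * v2 l2
  + v2 (Num.sqrt (l1 ^+ 2 + l2 ^+ 2 - 2 * l1 * l2 * cos th)) + v3 th.

Lemma adm_facts (R : realType) (c : cell R) (i : 'I_6) : admissible_cell c ->
  [/\ c (sh i 1) != c i, c (sh i 5) != c i & c (sh i 1) != c (sh i 5)].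
Proof.
move=> ad; have [h1 h2] := ad (sh i 1); have [h3 _] := ad i.
rewrite sh_sh sh6 in h1; rewrite sh_sh in h2.
by split => //; rewrite eq_sym.
Qed.

Lemma Ecell_decomp (R : realType) (v2 v3 : R -> R) (c : cell R) : admissible_cell c ->
  Ecell v2 v3 c = \sum_(i < 6) Ff v2 v3 (dist3 (c (sh i 1)) (c i)) (dist3 (c (sh i 5)) (c i))
                                (angle (c (sh i 5)) (c i) (c (sh i 1))).
Proof.
move=> ad; rewrite /Ecell /Ff !big_split /= -!mulr_sumr.
have hA1 : \sum_(i < 6) v2 (dist3 (c (sh i 1)) (c i)) = \sum_(i < 6) v2 (dist3 (c i) (c (sh i 5))).
  rewrite -(sum_sh1 (fun i => v2 (dist3 (c i) (c (sh i 5))))).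
  by apply: eq_bigr => i _ /=; rewrite sh_sh sh6.
have hA2 : \sum_(i < 6) v2 (dist3 (c (sh i 5)) (c i)) = \sum_(i < 6) v2 (dist3 (c i) (c (sh i 5))).
  by apply: eq_bigr => i _; rewrite dist3C.
have hB : \sum_(i < 6) v2 (dist3 (c i) (c (sh i 4))) =
  \sum_(i < 6) v2 (Num.sqrt (dist3 (c (sh i 1)) (c i) ^+ 2 + dist3 (c (sh i 5)) (c i) ^+ 2 -
          2 * dist3 (c (sh i 1)) (c i) * dist3 (c (sh i 5)) (c i) * cos (angle (c (sh i 5)) (c i) (c (sh i 1))))).
  rewrite -(sum_sh1 (fun i => v2 (dist3 (c i) (c (sh i 4))))).
  apply: eq_bigr => i _ /=; rewrite sh_sh.
  have [h1 h2 h3] := adm_facts i ad.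
  have [_ _ _ e] := law_cos h1 h2.
  by rewrite /dist3 e.
by rewrite hA1 hA2 hB; field.
Qed.

Lemma sqrt3_facts (R : realType) : 25/16 <= Num.sqrt 3 :> R /\ Num.sqrt 3 <= 2 :> R /\ Num.sqrt 3 ^+ 2 = 3 :> R.
Proof.
split; last split; last by rewrite sqr_sqrtr.
- have : Num.sqrt ((25/16) ^+ 2) <= Num.sqrt 3 :> R by rewrite ler_sqrt // expr2; lra.
  by rewrite sqrtr_sqr ger0_norm //; lra.
- have : Num.sqrt 3 <= Num.sqrt (2 ^+ 2) :> R by rewrite ler_sqrt // ?expr2; lra.
  by rewrite sqrtr_sqr ger0_norm.
Qed.

Lemma d_lb (R : realType) (d l1 l2 th : R) : 0 < d <= 1/5 -> 1 - d <= l1 -> 1 - d <= l2 ->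
  2 * pi / 3 - d <= th -> th <= pi ->
  Num.sqrt 3 * (1 - d) ^+ 2 <= Num.sqrt (l1 ^+ 2 + l2 ^+ 2 - 2 * l1 * l2 * cos th).
Proof.
move=> hd h1 h2 h3 h4.
have hk := cos_box_bound hd h3 h4.
move: hd => /andP[d0 d15].
have [s1 [s2 s3]] := sqrt3_facts R.
set k := cos th in hk *.
have e1 : 0 <= Num.sqrt 3 * (1 - d) ^+ 2 by rewrite mulr_ge0 ?sqrtr_ge0 ?sqr_ge0.
rewrite -(ger0_norm e1) -sqrtr_sqr ler_wsqrtr //.
rewrite exprMn s3.
have hl : (1 - d) ^+ 2 <= l1 * l2 by rewrite expr2; apply: ler_pM => //; lra.
have hk2 : 3 / 2 - d - d ^+ 2 / 4 <= 1 - k by lra.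
have hq : 3 * ((1 - d) ^+ 2) <= 2 * (3 / 2 - d - d ^+ 2 / 4).
  rewrite !expr2; nra.
have hp : 0 <= (1 - d) ^+ 2 by rewrite sqr_ge0.
have : 3 * (1 - d) ^+ 2 ^+ 2 <= 2 * (l1 * l2) * (1 - k).
  have : (1 - d) ^+ 2 * (3 * (1 - d) ^+ 2) <= (l1 * l2) * (2 * (1 - k)).
    apply: ler_pM => //; first by rewrite mulr_ge0.
    by lra.
  move=> h.
  have e7 : 3 * (1 - d) ^+ 2 ^+ 2 = (1 - d) ^+ 2 * (3 * (1 - d) ^+ 2) by ring.
  have e8 : 2 * (l1 * l2) * (1 - k) = l1 * l2 * (2 * (1 - k)) by ring.
  by rewrite e7 e8.
have : 0 <= (l1 - l2) ^+ 2 by rewrite sqr_ge0.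
move=> h5 h6. apply: le_trans h6 _.
rewrite -subr_ge0; apply: le_trans h5 _.
rewrite le_eqVlt; apply/orP; left; apply/eqP; ring.
Qed.

Definition inboxP (R : realType) (d l1 l2 th : R) : Prop :=
  [/\ `|l1 - 1| < d, `|l2 - 1| < d & `|th - 2 * pi / 3| < d].

Definition Sset (R : realType) (v2 v3 : R -> R) (d : R) : set R :=
  [set x | exists l1 l2 th, inboxP d l1 l2 th /\ x = Ff v2 v3 l1 l2 th].

Lemma Ff_sym (R : realType) (v2 v3 : R -> R) l1 l2 th : Ff v2 v3 l1 l2 th = Ff v2 v3 l2 l1 th.
Proof.
rewrite /Ff; have -> : l1 ^+ 2 + l2 ^+ 2 - 2 * l1 * l2 * cos th = l2 ^+ 2 + l1 ^+ 2 - 2 * l2 * l1 * cos th by ring.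
ring.
Qed.

Lemma Ff_ref (R : realType) (v2 v3 : R -> R) : v2 1 = -1 -> v3 (2 * pi / 3) = 0 ->
  Ff v2 v3 1 1 (2 * pi / 3) = - 2^-1 + v2 (Num.sqrt 3).
Proof.
move=> h1 h3; rewrite /Ff h1 h3 cos_2pi3.
have -> : 1 ^+ 2 + 1 ^+ 2 - 2 * 1 * 1 * - 2^-1 = 3 :> R by rewrite !expr1n; field.
by field.
Qed.

Lemma v2_mono (R : realType) (v2 : R -> R) :
  (forall x x', 1 <= x -> x < x' -> v2 x < v2 x') -> forall x x', 1 <= x -> x <= x' -> v2 x <= v2 x'.
Proof.
move=> hinc x x' h1; rewrite le_eqVlt => /orP[/eqP -> //|h]; exact/ltW/hinc.
Qed.

Lemma bad_l1 (R : realType) (v2 v3 : R -> R) (d l1 l2 th : R) :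
  (forall x, 0 < x -> -1 <= v2 x) ->
  (forall x x', 0 < x -> x < x' -> x' < 1 -> v2 x' < v2 x) ->
  (forall x x', 1 <= x -> x < x' -> v2 x < v2 x') ->
  (forall th, 0 <= th <= pi -> 0 <= v3 th) ->
  0 < d <= 1/5 ->
  v2 (1 - d) > 11 + 12 * v2 (Num.sqrt 3) ->
  v2 (1 + d) > -1 + 12 * v2 (Num.sqrt 3) - 12 * v2 (Num.sqrt 3 * (1 - d) ^+ 2) ->
  0 < l1 -> 0 < l2 -> 0 <= th <= pi ->
  0 < Num.sqrt (l1 ^+ 2 + l2 ^+ 2 - 2 * l1 * l2 * cos th) ->
  (l1 <= 1 - d \/ (1 + d <= l1 /\ 1 - d < l2 /\ `|th - 2 * pi / 3| < d)) ->
  - 2^-1 + v2 (Num.sqrt 3) < Ff v2 v3 l1 l2 th.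
Proof.
move=> hg2 hdec hinc hg3 hd hi hii l10 l20 hth hs hcase.
have [s1 [s2 s3]] := sqrt3_facts R.
have W1 : -1 <= v2 (Num.sqrt 3) by apply: hg2; lra.
have A2 := hg2 _ l20.
have A3 := hg2 _ hs.
have A4 := hg3 _ hth.
move: (hd) => /andP[d0 d15].
rewrite /Ff.
case: hcase => [hb|[hc1 [hc2 hc3]]].
  have : v2 (1 - d) <= v2 l1.
    move: hb; rewrite le_eqVlt => /orP[/eqP -> //|hb].
    by apply/ltW/hdec => //; lra.
  lra.
have hl1 : 1 - d <= l1 by lra.
move: hc3; rewrite ltr_norml => /andP[t1 t2].
have t3 : 2 * pi / 3 - d <= th by lra.
have t4 : th <= pi by case/andP: hth.
have hdl := d_lb hd hl1 (ltW hc2) t3 t4.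
set w0 := Num.sqrt 3 * (1 - d) ^+ 2 in hdl hii *.
have p1 : 16/25 <= (1 - d) ^+ 2.
  have -> : 16/25 = (4/5) ^+ 2 :> R by rewrite expr2; lra.
  by rewrite ler_sqr ?nnegrE; lra.
have p2 : (1 - d) ^+ 2 <= 1.
  by rewrite expr2; apply: mulr_ile1; lra.
have w01 : 1 <= w0.
  have : 25/16 * (16/25) <= w0 by rewrite /w0; apply: ler_pM => //; lra.
  lra.
have w0s : w0 <= Num.sqrt 3.
  rewrite /w0 -[X in _ <= X]mulr1; apply: ler_wpM2l => //; lra.
have V1 := v2_mono hinc w01 hdl.
have V2 := v2_mono hinc w01 w0s.
have V3 : v2 (1 + d) <= v2 l1 by apply: v2_mono => //; lra.
lra.
Qed.

Lemma w0_bounds (R : realType) (d : R) : 0 < d <= 1/5 ->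
  1 <= Num.sqrt 3 * (1 - d) ^+ 2 /\ Num.sqrt 3 * (1 - d) ^+ 2 <= Num.sqrt 3.
Proof.
move=> /andP[d0 d15]; have [s1 [s2 s3]] := sqrt3_facts R.
have p1 : 16/25 <= (1 - d) ^+ 2.
  have -> : 16/25 = (4/5) ^+ 2 :> R by rewrite expr2; lra.
  by rewrite ler_sqr ?nnegrE; lra.
have p2 : (1 - d) ^+ 2 <= 1.
  by rewrite expr2; apply: mulr_ile1; lra.
split.
  have : 25/16 * (16/25) <= Num.sqrt 3 * (1 - d) ^+ 2 by apply: ler_pM => //; lra.
  lra.
rewrite -[X in _ <= X]mulr1; apply: ler_wpM2l => //; lra.
Qed.

Lemma inbox_facts (R : realType) (d l1 l2 th : R) : 0 < d <= 1/5 -> inboxP d l1 l2 th ->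
  [/\ 0 < l1, 0 < l2, 0 <= th <= pi & 1 <= Num.sqrt (l1 ^+ 2 + l2 ^+ 2 - 2 * l1 * l2 * cos th)].
Proof.
move=> hd [b1 b2 b3]; have hp := pi_ge2 R.
move: (hd) => /andP[d0 d15].
move: b1 b2 b3; rewrite !ltr_norml => /andP[b1 b1'] /andP[b2 b2'] /andP[b3 b3'].
split; [lra|lra|apply/andP; split; lra|].
have [w1 _] := w0_bounds hd.
apply: le_trans w1 _; apply: d_lb => //; lra.
Qed.

Lemma Sset_has_inf (R : realType) (v2 v3 : R -> R) (d : R) :
  (forall x, 0 < x -> -1 <= v2 x) ->
  (forall th, 0 <= th <= pi -> 0 <= v3 th) -> 0 < d <= 1/5 ->
  has_inf (Sset v2 v3 d).
Proof.
move=> hg2 hg3 hd; move: (hd) => /andP[d0 d15]; split.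
  exists (Ff v2 v3 1 1 (2 * pi / 3)), 1, 1, (2 * pi / 3); split => //.
  by split; rewrite subrr normr0.
exists (- (3/2)) => x [l1 [l2 [th [hb ->]]]].
have [h1 h2 h3 h4] := inbox_facts hd hb.
have := hg2 _ h1; have := hg2 _ h2; have := hg3 _ h3.
have : 0 < Num.sqrt (l1 ^+ 2 + l2 ^+ 2 - 2 * l1 * l2 * cos th) by lra.
move/hg2; rewrite /Ff; lra.
Qed.

Lemma triple_lb (R : realType) (v2 v3 : R -> R) (d l1 l2 th : R) :
  (forall x, 0 < x -> -1 <= v2 x) -> v2 1 = -1 ->
  (forall x x', 0 < x -> x < x' -> x' < 1 -> v2 x' < v2 x) ->
  (forall x x', 1 <= x -> x < x' -> v2 x < v2 x') ->
  (forall th, 0 <= th <= pi -> 0 <= v3 th) -> v3 (2 * pi / 3) = 0 ->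
  0 < d <= 1/5 ->
  v2 (1 - d) > 11 + 12 * v2 (Num.sqrt 3) ->
  v2 (1 + d) > -1 + 12 * v2 (Num.sqrt 3) - 12 * v2 (Num.sqrt 3 * (1 - d) ^+ 2) ->
  (forall th, 0 <= th <= pi -> `|th - 2 * pi / 3| >= d -> v3 th > 6 + 6 * v2 (Num.sqrt 3)) ->
  0 < l1 -> 0 < l2 -> 0 <= th <= pi ->
  0 < Num.sqrt (l1 ^+ 2 + l2 ^+ 2 - 2 * l1 * l2 * cos th) ->
  inf (Sset v2 v3 d) <= Ff v2 v3 l1 l2 th.
Proof.
move=> hg2 h21 hdec hinc hg3 h30 hd hi hii hiii l10 l20 hth hs.
have hinf := Sset_has_inf hg2 hg3 hd.
have hlb := hinf.2.
suff : inboxP d l1 l2 th \/ - 2^-1 + v2 (Num.sqrt 3) < Ff v2 v3 l1 l2 th.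
  case => [hb|hlt].
    by apply: ge_inf => //; exists l1, l2, th.
  apply: le_trans (ltW hlt).
  rewrite -(Ff_ref h21 h30); apply: ge_inf => //; exists 1, 1, (2 * pi / 3); split => //.
  by move: hd => /andP[d0 _]; split; rewrite subrr normr0.
have hs' : 0 < Num.sqrt (l2 ^+ 2 + l1 ^+ 2 - 2 * l2 * l1 * cos th).
  suff -> : l2 ^+ 2 + l1 ^+ 2 - 2 * l2 * l1 * cos th = l1 ^+ 2 + l2 ^+ 2 - 2 * l1 * l2 * cos th by [].
  ring.
have [s1 [s2 s3]] := sqrt3_facts R.
case: (boolP (`|th - 2 * pi / 3| < d)) => ht; last first.
  right; rewrite -leNgt in ht.
  have := hiii _ hth ht.
  have W1 : -1 <= v2 (Num.sqrt 3) by apply: hg2; lra.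
  have := hg2 _ l10; have := hg2 _ l20; have := hg2 _ hs.
  rewrite /Ff; lra.
case: (boolP (1 - d < l1)) => h1; last first.
  by right; apply: (bad_l1 hg2 hdec hinc hg3 hd hi hii) => //; left; rewrite leNgt.
case: (boolP (1 - d < l2)) => h2; last first.
  by right; rewrite Ff_sym; apply: (bad_l1 hg2 hdec hinc hg3 hd hi hii) => //; left; rewrite leNgt.
case: (boolP (l1 < 1 + d)) => h3; last first.
  by right; apply: (bad_l1 hg2 hdec hinc hg3 hd hi hii) => //; right; rewrite leNgt.
case: (boolP (l2 < 1 + d)) => h4; last first.
  by right; rewrite Ff_sym; apply: (bad_l1 hg2 hdec hinc hg3 hd hi hii) => //; right; rewrite leNgt.
left; split => //; rewrite ltr_norml; apply/andP; split; lra.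
Qed.

Lemma cell_lb (R : realType) (v2 v3 : R -> R) (d : R) (c : cell R) :
  (forall x, 0 < x -> -1 <= v2 x) -> v2 1 = -1 ->
  (forall x x', 0 < x -> x < x' -> x' < 1 -> v2 x' < v2 x) ->
  (forall x x', 1 <= x -> x < x' -> v2 x < v2 x') ->
  (forall th, 0 <= th <= pi -> 0 <= v3 th) -> v3 (2 * pi / 3) = 0 ->
  0 < d <= 1/5 ->
  v2 (1 - d) > 11 + 12 * v2 (Num.sqrt 3) ->
  v2 (1 + d) > -1 + 12 * v2 (Num.sqrt 3) - 12 * v2 (Num.sqrt 3 * (1 - d) ^+ 2) ->
  (forall th, 0 <= th <= pi -> `|th - 2 * pi / 3| >= d -> v3 th > 6 + 6 * v2 (Num.sqrt 3)) ->
  admissible_cell c -> 6 * inf (Sset v2 v3 d) <= Ecell v2 v3 c.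
Proof.
move=> hg2 h21 hdec hinc hg3 h30 hd hi hii hiii ad.
rewrite Ecell_decomp //.
have -> : 6 * inf (Sset v2 v3 d) = \sum_(i < 6) inf (Sset v2 v3 d).
  by rewrite sumr_const card_ord mulr_natl.
apply: ler_sum => i _.
have [h1 h2 h3] := adm_facts i ad.
have [a0 b0 th e] := law_cos h1 h2.
apply: (triple_lb hg2 h21 hdec hinc hg3 h30 hd hi hii hiii) => //.
rewrite /dist3 -e; exact: enorm_gt0.
Qed.

Lemma near_opt (R : realType) (v2 v3 : R -> R) (d eps : R) :
  (forall x, 0 < x -> -1 <= v2 x) ->
  (forall x x', 1 <= x -> x < x' -> v2 x < v2 x') ->
  (forall th, 0 <= th <= pi -> 0 <= v3 th) -> v3 (2 * pi / 3) = 0 ->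
  0 < d <= 1/5 ->
  (forall l1 l2 th l1' l2' th' lam, inboxP d l1 l2 th -> inboxP d l1' l2' th' ->
      (l1, l2, th) <> (l1', l2', th') -> 0 < lam < 1 ->
      Ff v2 v3 (lam * l1 + (1 - lam) * l1') (lam * l2 + (1 - lam) * l2')
        (lam * th + (1 - lam) * th')
      < lam * Ff v2 v3 l1 l2 th + (1 - lam) * Ff v2 v3 l1' l2' th') ->
  0 < eps ->
  exists l th, [/\ 1 - d < l < 1 + d, 2 * pi / 3 - d < th <= 2 * pi / 3 &
                  Ff v2 v3 l l th < inf (Sset v2 v3 d) + eps].
Proof.
move=> hg2 hinc hg3 h30 hd hconv e0.
have hinf := Sset_has_inf hg2 hg3 hd.
have [_ [l1 [l2 [th [hb ->]]]] hlt] := inf_adherent e0 hinf.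
set m := inf _ in hlt *.
have [l [hbl hle]] : exists l, inboxP d l l th /\ Ff v2 v3 l l th <= Ff v2 v3 l1 l2 th.
  case: (eqVneq l1 l2) => [<-|hne]; first by exists l1; split => //; case: hb.
  have hb' : inboxP d l2 l1 th by case: hb.
  have := hconv _ _ _ _ _ _ 2^-1 hb hb'.
  rewrite [Ff v2 v3 l2 l1 th]Ff_sym.
  have -> : 2^-1 * l2 + (1 - 2^-1) * l1 = 2^-1 * l1 + (1 - 2^-1) * l2 by field.
  have -> : 2^-1 * th + (1 - 2^-1) * th = th by field.
  have -> : 2^-1 * Ff v2 v3 l1 l2 th + (1 - 2^-1) * Ff v2 v3 l1 l2 th = Ff v2 v3 l1 l2 th by field.
  move=> h; exists (2^-1 * l1 + (1 - 2^-1) * l2); split; last first.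
    apply/ltW/h => //; last by apply/andP; split; lra.
    by case => e1 _; move: hne; rewrite e1 eqxx.
  case: hb => b1 b2 b3; split => //; move: b1 b2; rewrite !ltr_norml => /andP[? ?] /andP[? ?];
    apply/andP; split; lra.
have [h1 h2 h3 h4] := inbox_facts hd hbl.
case: hbl => b1 _ b3.
move: b1 b3; rewrite !ltr_norml => /andP[b1 b1'] /andP[b3 b3'].
case: (lerP th (2 * pi / 3)) => hth.
  exists l, th; split; [apply/andP; split; lra | apply/andP; split; lra | lra].
exists l, (2 * pi / 3); split; [apply/andP; split; lra | apply/andP; split; lra | ].
apply: le_lt_trans hlt; apply: le_trans hle.
have hbr : inboxP d l l (2 * pi / 3).
  split; first (by rewrite ltr_norml; apply/andP; split; lra).
    by rewrite ltr_norml; apply/andP; split; lra.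
  by rewrite subrr normr0; case/andP: hd.
have [_ _ _ s1] := inbox_facts hd hbr.
rewrite /Ff h30.
have hcos : cos th <= cos (2 * pi / 3) by apply: cos_le_mono; [have := pi_ge2 R; lra|lra|case/andP: h3].
have : v2 (Num.sqrt (l ^+ 2 + l ^+ 2 - 2 * l * l * cos (2 * pi / 3))) <=
       v2 (Num.sqrt (l ^+ 2 + l ^+ 2 - 2 * l * l * cos th)).
  apply: v2_mono => //; apply: ler_wsqrtr.
  have : 0 <= 2 * l * l by rewrite -mulrA mulr_ge0 // mulr_ge0 // ltW.
  nra.
have := hg3 _ h3; lra.
Qed.

Definition zdef (R : realType) (al be : R) : deformation R := fun s t b =>
  mk3 (al * s%:~R + (if b then al + be else 0)) (al * t%:~R + (if b then be else 0))
      (al * (- s%:~R - t%:~R) + (if b then be else 0)).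

Lemma zcell_facts (R : realType) (al be : R) s t (i : 'I_6) :
  let c := cell_of (zdef al be) s t in
  [/\ dot (c i - c (sh i 5)) (c i - c (sh i 5)) = al ^+ 2 + 2 * al * be + 3 * be ^+ 2,
      dot (c (sh i 1) - c i) (c (sh i 1) - c i) = al ^+ 2 + 2 * al * be + 3 * be ^+ 2,
      dot (c (sh i 5) - c i) (c (sh i 5) - c i) = al ^+ 2 + 2 * al * be + 3 * be ^+ 2,
      dot (c i - c (sh i 4)) (c i - c (sh i 4)) = 2 * al ^+ 2 &
      dot (c (sh i 1) - c i) (c (sh i 5) - c i) = 3 * be ^+ 2 + 2 * al * be].
Proof.
case: i => [[|[|[|[|[|[|//]]]]]] hi]; rewrite /cell_of /cellH /sh /= /zdef !mk3B !dot_mk3 ?rmorphD ?rmorphB ?rmorph1 /=;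
  split; ring.
Qed.

Lemma buckled (R : realType) (v2 v3 : R -> R) (l th : R) :
  0 < l -> 0 < th -> th <= 2 * pi / 3 ->
  exists z : deformation R, forall s t,
    admissible_cell (cell_of z s t) /\ Ecell v2 v3 (cell_of z s t) = 6 * Ff v2 v3 l l th.
Proof.
move=> l0 th0 th23.
have hp := pi_ge2 R.
have thpi : th <= pi by lra.
remember (cos th) as c eqn:ec.
have c1 : c < 1.
  by rewrite ec -cos0 ltr_cos ?in_itv /= ?lexx ?pi_ge0 // (ltW th0) thpi.
have c2 : - 2^-1 <= c by rewrite ec -cos_2pi3; apply: cos_le_mono => //; lra.
set al := l * Num.sqrt (1 - c).
set be := (l * Num.sqrt (1 + 2 * c) - al) / 3.
have hal : al ^+ 2 = l ^+ 2 * (1 - c) by rewrite /al exprMn sqr_sqrtr // subr_ge0 ltW.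
have hq : Num.sqrt (1 + 2 * c) ^+ 2 = 1 + 2 * c by rewrite sqr_sqrtr //; lra.
have hbe : 3 * be ^+ 2 + 2 * al * be = l ^+ 2 * c.
  have e : 3 * be ^+ 2 + 2 * al * be = ((l ^+ 2) * (Num.sqrt (1 + 2 * c) ^+ 2) - al ^+ 2) / 3.
    by rewrite /be; field.
  by rewrite e hq hal; field.
have al0 : 0 < al by rewrite /al mulr_gt0 // sqrtr_gt0 subr_gt0.
clearbody al be.
have hL : al ^+ 2 + 2 * al * be + 3 * be ^+ 2 = l ^+ 2.
  have -> : al ^+ 2 + 2 * al * be + 3 * be ^+ 2 = al ^+ 2 + (3 * be ^+ 2 + 2 * al * be) by ring.
  rewrite hbe hal; ring.
exists (zdef al be) => s t.
set cc := cell_of _ s t.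
have hne : forall u v : vec R, dot (u - v) (u - v) <> 0 -> u != v.
  by move=> u v h; apply/eqP => e; apply: h; rewrite e subrr /dot big1 // => i _; rewrite mxE mul0r.
split.
  move=> i; have [e1 _ _ e4 _] := zcell_facts al be s t i.
  split; apply: hne; rewrite /cc ?e1 ?e4.
    by rewrite hL; apply/eqP; rewrite gt_eqF // exprn_gt0.
  by apply/eqP; rewrite gt_eqF // mulr_gt0 // exprn_gt0.
rewrite /Ecell.
have sl : Num.sqrt (l ^+ 2) = l by rewrite sqrtr_sqr ger0_norm // ltW.
have E1 : \sum_(i < 6) v2 (dist3 (cc i) (cc (sh i 5))) = \sum_(i < 6) v2 l.
  by apply: eq_bigr => i _; have [e1 _ _ _ _] := zcell_facts al be s t i; rewrite /dist3 /enorm /cc e1 hL sl.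
have E2 : \sum_(i < 6) v2 (dist3 (cc i) (cc (sh i 4))) = \sum_(i < 6) v2 (Num.sqrt (2 * al ^+ 2)).
  by apply: eq_bigr => i _; have [_ _ _ e4 _] := zcell_facts al be s t i; rewrite /dist3 /enorm /cc e4.
have E3 : \sum_(i < 6) v3 (angle (cc (sh i 5)) (cc i) (cc (sh i 1))) = \sum_(i < 6) v3 th.
  apply: eq_bigr => i _; have [_ e2 e3 _ e5] := zcell_facts al be s t i.
  rewrite /angle /enorm /cc e2 e3 e5 hL sl hbe.
  have -> : l ^+ 2 * c / (l * l) = c by rewrite expr2; field; rewrite gt_eqF.
  by rewrite ec cosK // in_itv /= (ltW th0) thpi.
rewrite E1 E2 E3.
rewrite !sumr_const card_ord /Ff.
have -> : l ^+ 2 + l ^+ 2 - 2 * l * l * cos th = 2 * al ^+ 2 by rewrite hal -ec; ring.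
by field.
Qed.

Lemma zrange_mem (N : nat) (x : int) : `|x| <= N%:Z -> x \in zrange N.
Proof.
move=> hx; apply/mapP; exists (absz (x + N%:Z)).
  rewrite mem_iota /=.
  move: hx; rewrite ler_norml => /andP[h1 h2]. lia.
move: hx; rewrite ler_norml => /andP[h1 h2]. lia.
Qed.

Lemma int_box (R : realType) (m : nat) (s : int) : `|s%:~R : R| <= 3 * m%:R + 3 -> `|s| <= (3 * m + 3)%N%:Z.
Proof.
move=> h; rewrite -(ler_int R) intr_norm.
apply: le_trans h _; rewrite -pmulrn natrD natrM; lra.
Qed.

Lemma ball_mem (R : realType) (m : nat) (s t : int) : in_ball R m (s, t) -> (s, t) \in ball_cells R m.
Proof.
move=> hb; have [h1 h2] := ball_in_box hb.
rewrite /ball_cells mem_filter hb andTb.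
apply/allpairsP; exists (s, t) => /=; split => //.
  by apply: zrange_mem; apply: (int_box (R := R)).
by apply: zrange_mem; apply: (int_box (R := R)).
Qed.

Lemma in_ball00 (R : realType) (m : nat) : (1 <= m)%N -> in_ball R m (0, 0).
Proof.
move=> hm; rewrite /in_ball /barycenter /= /sqrt3.
have [_ [_ s3]] := sqrt3_facts R.
rewrite !mulr0z !mulr0 !addr0.
have -> : (1 / 2) ^+ 2 + (Num.sqrt 3 / 2) ^+ 2 = 1 :> R.
  by rewrite !expr_div_n s3; field.
have : (1 : R) <= m%:R by rewrite ler1n.
move=> h; have : 1 <= m%:R ^+ 2 :> R by rewrite expr2; nra.
lra.
Qed.

Lemma in_ball_big (R : realType) (s t : int) : in_ball R (3 + 5 * (`|s| + `|t|))%N (s, t).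
Proof.
rewrite /in_ball /barycenter /=.
have [_ [_ s3]] := sqrt3_facts R.
set S : R := s%:~R; set T : R := t%:~R.
have -> : (sqrt3 R / 2 + sqrt3 R / 2 * S + sqrt3 R * T) ^+ 2 = 3 * (1/2 + S/2 + T) ^+ 2.
  by rewrite -s3 /sqrt3; field.
set A : R := (`|s| + `|t|)%N%:R.
have -> : (3 + 5 * (`|s| + `|t|))%N%:R = 3 + 5 * A :> R by rewrite /A natrD natrM.
have hS : `|S| <= A.
  by rewrite /S /A -intr_norm natrD !natr_absz lerDl intr_norm normr_ge0.
have hT : `|T| <= A.
  by rewrite /T /A -intr_norm natrD !natr_absz lerDr intr_norm normr_ge0.
move: hS hT; rewrite !ler_norml => /andP[a1 a2] /andP[b1 b2].
have A0 : 0 <= A by lra.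
have h1 : (1/2 + 3/2 * S) ^+ 2 <= (1/2 + 3/2 * A) ^+ 2 by rewrite !expr2; nra.
have h2 : (1/2 + S/2 + T) ^+ 2 <= (1/2 + 3/2 * A) ^+ 2 by rewrite !expr2; nra.
have h3 : 4 * (1/2 + 3/2 * A) ^+ 2 <= (3 + 5 * A) ^+ 2 by rewrite !expr2; nra.
lra.
Qed.

Lemma sum_seq_ge (R : realType) (T : eqType) (s : seq T) (g : T -> R) K :
  (forall x, K <= g x) -> K * (size s)%:R <= \sum_(x <- s) g x.
Proof.
move=> h; elim: s => [|x s IH]; first by rewrite big_nil mulr0.
rewrite big_cons /= -addn1 natrD mulrDr mulr1 addrC; exact: lerD.
Qed.

Lemma sum_seq_le (R : realType) (T : eqType) (s : seq T) (g : T -> R) K :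
  (forall x, g x <= K) -> \sum_(x <- s) g x <= K * (size s)%:R.
Proof.
move=> h; elim: s => [|x s IH]; first by rewrite big_nil mulr0.
rewrite big_cons /= -addn1 natrD mulrDr mulr1 addrC; exact: lerD.
Qed.

Lemma sum_seq_gap (R : realType) (T : eqType) (s : seq T) (g : T -> R) K eta x0 :
  (forall x, K <= g x) -> x0 \in s -> K + eta <= g x0 ->
  K * (size s)%:R + eta <= \sum_(x <- s) g x.
Proof.
move=> h; elim: s => [|x s IH] //.
rewrite in_cons big_cons /= -addn1 natrD mulrDr mulr1 => /orP[/eqP <-|hin] hg.
  have := sum_seq_ge s h; lra.
have := IH hin hg; have := h x; lra.
Qed.

Lemma size_ball_gt0 (R : realType) (m : nat) : (1 <= m)%N -> (0 < size (ball_cells R m))%N.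
Proof.
move=> hm; have := ball_mem (in_ball00 R hm).
by case: (ball_cells R m).
Qed.

Lemma avg_ge (R : realType) (v2 v3 : R -> R) (y : deformation R) (m : nat) K :
  (1 <= m)%N -> (forall s t, K <= Ecell v2 v3 (cell_of y s t)) -> K <= avg_energy v2 v3 y m.
Proof.
move=> hm h; rewrite /avg_energy ler_pdivlMr ?ltr0n ?size_ball_gt0 //.
by apply: sum_seq_ge => x; apply: h.
Qed.

Lemma avg_le (R : realType) (v2 v3 : R -> R) (y : deformation R) (m : nat) K :
  (1 <= m)%N -> (forall s t, Ecell v2 v3 (cell_of y s t) <= K) -> avg_energy v2 v3 y m <= K.
Proof.
move=> hm h; rewrite /avg_energy ler_pdivrMr ?ltr0n ?size_ball_gt0 //.
by apply: sum_seq_le => x; apply: h.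
Qed.

Lemma avg_gap (R : realType) (v2 v3 : R -> R) (y : deformation R) (m : nat) K eta s0 t0 :
  (1 <= m)%N -> (forall s t, K <= Ecell v2 v3 (cell_of y s t)) ->
  K + eta <= Ecell v2 v3 (cell_of y s0 t0) -> (s0, t0) \in ball_cells R m ->
  K + eta / (size (ball_cells R m))%:R <= avg_energy v2 v3 y m.
Proof.
move=> hm h hg hin.
have N0 : (0 : R) < (size (ball_cells R m))%:R by rewrite ltr0n size_ball_gt0.
rewrite /avg_energy ler_pdivlMr // mulrDl divfK ?gt_eqF //.
by apply: (sum_seq_gap (x0 := (s0, t0))) => // x; apply: h.
Qed.

Lemma energy_ge (R : realType) (v2 v3 : R -> R) (y : deformation R) (m : nat) :
  (1 <= m)%N -> ((avg_energy v2 v3 y m)%:E <= energy v2 v3 y)%E.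
Proof. by move=> hm; apply: ereal_sup_ubound; exists m. Qed.

Lemma energy_le (R : realType) (v2 v3 : R -> R) (y : deformation R) K :
  (forall m, (1 <= m)%N -> avg_energy v2 v3 y m <= K) -> (energy v2 v3 y <= K%:E)%E.
Proof. by move=> h; apply: ge_ereal_sup => _ [m hm <-]; rewrite lee_fin; apply: h. Qed.

Theorem mainTheorem1 (R : realType) (v2 v3 : R -> R) (delta : R) :
  standing_assumptions v2 v3 delta ->
  forall y : deformation R,
    ground_state v2 v3 y <-> (forall s t : int, optimal_cell v2 v3 (cell_of y s t)).
Proof.
case => [[_ [hg2 [h21 [_ [hdec [hinc _]]]]]] [[_ [hg3 [h30 [_ _]]]] [hd [hi [hii [hiii hconv]]]]]] y.
have hconv' : forall l1 l2 th l1' l2' th' lam, inboxP delta l1 l2 th -> inboxP delta l1' l2' th' ->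
      (l1, l2, th) <> (l1', l2', th') -> 0 < lam < 1 ->
      Ff v2 v3 (lam * l1 + (1 - lam) * l1') (lam * l2 + (1 - lam) * l2')
        (lam * th + (1 - lam) * th')
      < lam * Ff v2 v3 l1 l2 th + (1 - lam) * Ff v2 v3 l1' l2' th' := hconv.
split.
- move=> [ady hgs] s0 t0; split; first exact: ady.
  move=> c' adc'; rewrite leNgt; apply/negP => hlt.
  set m := inf (Sset v2 v3 delta).
  have lbc : forall c, admissible_cell c -> 6 * m <= Ecell v2 v3 c.
    by move=> c; apply: (cell_lb hg2 h21 hdec hinc hg3 h30 hd hi hii hiii).
  have hK : forall s t, 6 * m <= Ecell v2 v3 (cell_of y s t) by move=> s t; apply: lbc.
  have hc' := lbc _ adc'.
  set E0 := Ecell v2 v3 (cell_of y s0 t0) in hlt.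
  set eta := E0 - 6 * m.
  have eta0 : 0 < eta by rewrite /eta; lra.
  set M := (3 + 5 * (`|s0| + `|t0|))%N.
  have hM : (1 <= M)%N by rewrite /M.
  have hin := ball_mem (in_ball_big R s0 t0).
  have N0 : (0 : R) < (size (ball_cells R M))%:R by rewrite ltr0n size_ball_gt0.
  set N := (size (ball_cells R M))%:R in N0.
  have gap := avg_gap hM hK (ltac:(rewrite /eta; lra) : 6 * m + eta <= E0) hin.
  have q0 : 0 < eta / N by rewrite divr_gt0.
  have e0 : 0 < eta / N / 12 by rewrite divr_gt0.
  have [l [th [hl hth hF]]] := near_opt hg2 hinc hg3 h30 hd hconv' e0.
  have hp := pi_ge2 R.
  move: hd hl hth => /andP[d0 d15] /andP[l1 l2] /andP[th1 th2].
  have [z hz] := buckled v2 v3 (ltac:(lra) : 0 < l) (ltac:(lra) : 0 < th) th2.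
  have Ez : (energy v2 v3 z <= (6 * Ff v2 v3 l l th)%:E)%E.
    by apply: energy_le => m' hm'; apply: avg_le => // s t; rewrite (hz s t).2.
  have Ey := energy_ge v2 v3 y hM.
  have := le_trans Ey (le_trans (hgs z (fun s t => (hz s t).1)) Ez).
  rewrite lee_fin => h.
  have := le_trans gap h.
  rewrite -/N in hF *.
  lra.
- move=> hopt.
  have ady : admissible y by move=> s t; case: (hopt s t).
  split => // z adz.
  set e := Ecell v2 v3 (cell_of y 0 0).
  have h1 : forall s t, Ecell v2 v3 (cell_of y s t) <= e by move=> s t; apply: (hopt s t).2; apply: ady.
  have h2 : forall s t, e <= Ecell v2 v3 (cell_of z s t) by move=> s t; apply: (hopt 0 0).2; apply: adz.
  have Ey : (energy v2 v3 y <= e%:E)%E by apply: energy_le => m hm; apply: avg_le.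
  apply: (le_trans Ey).
  apply: le_trans (energy_ge v2 v3 z (isT : (1 <= 1)%N)).
  by rewrite lee_fin; apply: avg_ge.
Qed.
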